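(* Let $\mathcal G=(V,E,r)$ be a non-null graph. (1) An atom $a\in\mathbf A(\mathcal G)$ with $\operatorname{supp}(a)=(V',E',r')$ is prime if and only if $\deg_{\mathcal G}(v)\le 1$ for all $v\in V'$. (2) Let $a$ be an atom of $\mathbf A(\mathcal G)$ and $b\in\mathbf A(\mathcal G)$. If $a$ is a summand of $nb$ for some $n\ge1$, then $a$ is a summand of $b$. (3) Every atom of $\mathbf A(\mathcal G)$ is absolutely irreducible. (4) Let $\mathcal G_1,\dots,\mathcal G_s$ be pairwise disjoint, connected, non-null subgraphs of $\mathcal G$. Then the factorization of $a=\mathbf 1_{\mathcal G_1}+\dots+\mathbf 1_{\mathcal G_s}$ into atoms is unique up to order.
   Context: A graph $\mathcal G=(V,E,r)$ consists of a finite vertex set $V$, a finite edge set $E$ disjoint from $V$, and a map $r$ assigning to each edge a two-element subset of $V$; multiple edges allowed, no loops; non-null means $V\ne\emptyset$. $\deg_{\mathcal G}(v)$ is the number of edges incident with $v$. An agglomeration on $\mathcal G$ is a function $a\colon V\cup E\to\mathbb N_0$ with $a(v)\ge a(e)$ whenever $v$ is incident with $e$; $\mathbf A(\mathcal G)$ is the monoid of agglomerations under pointwise addition. $\operatorname{supp}(a)$ is the subgraph of vertices and edges where $a$ is positive; $\mathbf 1_{\mathcal G'}$ is the indicator of a subgraph. $a$ is a summand of $b$ if $b=a+c$ for some $c\in\mathbf A(\mathcal G)$. An atom is a nonzero element not a sum of two nonzero elements; an atom $p$ is prime if whenever $p$ is a summand of $b+c$ it is a summand of $b$ or of $c$; an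 atom $a$ is absolutely irreducible if for every $n\ge1$ the only factorization of $na$ into atoms is $a+\dots+a$. *)

(* Defs.v *)
From mathcomp Require Import all_boot.
Set Implicit Arguments. Unset Strict Implicit. Unset Printing Implicit Defensive.

(* A graph G = (V, E, r): finite vertex type V, finite edge type E, and
   r : E -> {set V} assigning to each edge a two-element subset of V
   (the hypothesis #|r e| = 2 is put in the theorem).  Multiple edges are
   allowed (r need not be injective); no loops since #|r e| = 2.
   Functions on V ∪ E are functions on the disjoint sum V + E. *)

Section Agglomerations.
Variables (V E : finType) (r : E -> {set V}).

Definition aggT := {ffun (V + E)%type -> nat}.

Definition deg (v : V) : nat := #|[set e | v \in r e]|.

Definition is_agg (a : aggT) : Prop :=
  forall (e : E) (v : V), v \in r e -> a (inr e) <= a (inl v).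

Definition agg0 : aggT := [ffun _ => 0].
Definition agg_add (a b : aggT) : aggT := [ffun x => a x + b x].
Definition agg_scale (n : nat) (a : aggT) : aggT := [ffun x => n * a x].
Definition agg_sum (s : seq aggT) : aggT := foldr agg_add agg0 s.

Definition summand (a b : aggT) : Prop :=
  exists c, is_agg c /\ b = agg_add a c.

Definition atom (a : aggT) : Prop :=
  [/\ is_agg a, a <> agg0 &
      forall b c, is_agg b -> is_agg c -> a = agg_add b c -> b = agg0 \/ c = agg0].

Definition prime_el (p : aggT) : Prop :=
  atom p /\
  forall b c, is_agg b -> is_agg c -> summand p (agg_add b c) ->
    summand p b \/ summand p c.

Definition factorization (s : seq aggT) (b : aggT) : Prop :=
  (forall x, x \in s -> atom x) /\ agg_sum s = b.

Definition abs_irreducible (a : aggT) : Prop :=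
  atom a /\
  forall n, 1 <= n -> forall s, factorization s (agg_scale n a) ->
    forall x, x \in s -> x = a.

Definition is_subgraph (Vs : {set V}) (Es : {set E}) : Prop :=
  forall e, e \in Es -> r e \subset Vs.

Definition sub_adj (Es : {set E}) : rel V :=
  fun u w => [exists e in Es, (u \in r e) && (w \in r e)].

Definition sub_connected (Vs : {set V}) (Es : {set E}) : Prop :=
  forall u w, u \in Vs -> w \in Vs -> connect (sub_adj Es) u w.

Definition indicator (Vs : {set V}) (Es : {set E}) : aggT :=
  [ffun x => match x with inl v => nat_of_bool (v \in Vs)
                        | inr e => nat_of_bool (e \in Es) end].

End Agglomerations.

(* Main.v *)
Require Import Defs.
From mathcomp Require Import all_boot zify.
Set Implicit Arguments. Unset Strict Implicit. Unset Printing Implicit Defensive.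

Section S.
Variables (V E : finType) (r : E -> {set V}).
Hypothesis hr : forall e, #|r e| = 2.
Local Notation agg := (aggT V E).

Definition agg_sub (a b : agg) : agg := [ffun x => a x - b x].
Definition agg_max (a b : agg) : agg := [ffun x => maxn (a x) (b x)].

Ltac simp := unfold agg0, agg_sub, agg_add, agg_max, agg_scale, indicator; rewrite ?ffunE.
Ltac simpH H := unfold agg0, agg_sub, agg_add, agg_max, agg_scale, indicator in H; rewrite ?ffunE in H.

Ltac fixapps :=
 repeat match goal with H : context [@fun_of_fin _ _ _ _ _] |- _ => revert H end;
 repeat match goal with
 | |- context [@fun_of_fin ?T ?F ?P ?a ?y] =>
     let u := fresh "u" in set u := @fun_of_fin T F P a y; clearbody u
 end.
Ltac nlia := fixapps; lia.

Lemma endpoint e : exists v, v \in r e.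
Proof.
have : 0 < #|r e| by rewrite hr.
by rewrite card_gt0 => /set0Pn.
Qed.

Lemma atom_split a b : atom r a -> is_agg r b -> (forall y, b y <= a y) ->
  is_agg r (agg_sub a b) -> b = agg0 V E \/ a = b.
Proof.
case=> _ _ H hb hba hs.
have E1 : a = agg_add b (agg_sub a b).
  by apply/ffunP=> y; simp; rewrite subnKC.
case: (H _ _ hb hs E1) => [->|H0]; first by left.
right; apply/ffunP=> y; move/ffunP: H0 => /(_ y); simp => H0.
by have := hba y; nlia.
Qed.

Lemma atom_nz a : atom r a -> exists y, 0 < a y.
Proof.
case=> _ hn _; apply/existsP; apply: contraT; rewrite negb_exists => /forallP H.
case: hn; apply/ffunP=> y; simp; have := H y; nlia.
Qed.

Lemma atom01 a : atom r a -> forall y, a y <= 1.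
Proof.
move=> ha; have [hag _ _] := ha.
pose s : agg := [ffun y => minn (a y) 1].
have hs : is_agg r s.
  move=> e v hv; rewrite /s; simp; have := hag e v hv; nlia.
have := atom_split ha hs.
case.
- by move=> y; rewrite /s; simp; nlia.
- move=> e v hv; rewrite /s; simp; have := hag e v hv; nlia.
- move=> H0; have [y hy] := atom_nz ha.
  by move/ffunP: H0 => /(_ y); rewrite /s; simp; nlia.
- by move=> -> y; rewrite /s; simp; nlia.
Qed.

Lemma summandP p x : summand r p x <-> (forall y, p y <= x y) /\ is_agg r (agg_sub x p).
Proof.
split.
- case=> c [hc ->]; split; first by move=> y; simp; nlia.
  move=> e v hv; simp; have := hc e v hv; nlia.
- case=> h1 h2; exists (agg_sub x p); split=> //.
  by apply/ffunP=> y; simp; rewrite subnKC.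
Qed.

Lemma agg_sumE (s : seq agg) y : agg_sum s y = \sum_(h <- s) h y.
Proof.
elim: s => [|h s IH]; first by rewrite big_nil; simp.
by rewrite big_cons /=; simp; rewrite IH.
Qed.

Lemma le_sum (s : seq agg) h y : h \in s -> h y <= agg_sum s y.
Proof.
rewrite agg_sumE; elim: s => [//|h' s IH]; rewrite in_cons big_cons.
case/orP=> [/eqP->|/IH]; nlia.
Qed.

Lemma leq_sum_seq (s : seq agg) (F G : agg -> nat) :
  (forall h, h \in s -> F h <= G h) -> \sum_(h <- s) F h <= \sum_(h <- s) G h.
Proof.
move=> H; rewrite big_seq_cond [X in _ <= X]big_seq_cond.
by apply: leq_sum => i /andP [hi _]; apply: H.
Qed.

Lemma sum_eq_le (s : seq agg) (F G : agg -> nat) :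
  (forall h, h \in s -> F h <= G h) -> \sum_(h <- s) F h = \sum_(h <- s) G h ->
  forall h, h \in s -> F h = G h.
Proof.
elim: s => [//|h' s IH] hle; rewrite !big_cons => heq h.
have h1 := hle h' (mem_head _ _).
have h2 : \sum_(j <- s) F j <= \sum_(j <- s) G j.
  by apply: leq_sum_seq=> i hi; apply: hle; rewrite in_cons hi orbT.
have e1 : F h' = G h' by nlia.
have e2 : \sum_(j <- s) F j = \sum_(j <- s) G j by nlia.
rewrite in_cons => /orP [/eqP->//|hs].
by apply: IH hs => // i hi; apply: hle; rewrite in_cons hi orbT.
Qed.


Lemma part2 a b n : atom r a -> is_agg r b -> 1 <= n ->
  summand r a (agg_scale n b) -> summand r a b.
Proof.
move=> ha hb hn /summandP [h1 h2]. have h01 := atom01 ha. have [hag _ _] := ha.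
apply/summandP; split.
- move=> y; have := h1 y; have := h01 y; simp; fixapps; nia.
- move=> e v hv; have := h2 e v hv; have := hb e v hv; have := hag e v hv.
  have := h01 (inl v); have := h01 (inr e); have := h1 (inl v); simp; fixapps; nia.
Qed.

Lemma part3 a : atom r a -> abs_irreducible r a.
Proof.
move=> ha; split=> // n hn s [hs hsum] x hx.
have h01 := atom01 ha; have [hag ha0 _] := ha.
have hx01 := atom01 (hs x hx). have [hxag hx0 _] := hs x hx.
have hle y : x y <= n * a y.
  by have := le_sum y hx; rewrite hsum; simp.
have heq e v : v \in r e -> 0 < a (inr e) -> x (inr e) = x (inl v).
  move=> hv hae.
  have ae1 : a (inr e) = 1 by have := h01 (inr e); nlia.
  have av1 : a (inl v) = 1 by have := h01 (inl v); have := hag e v hv; nlia.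
  apply: (sum_eq_le (F := fun h => h (inr e)) (G := fun h => h (inl v)) _ _ hx).
  - move=> h hh; have [hg _ _] := hs h hh; exact: hg e v hv.
  - by rewrite -!agg_sumE hsum; simp; rewrite ae1 av1.
have hxa y : x y <= a y.
  have := hle y; have := hx01 y; have := h01 y; fixapps; nia.
have hsub : is_agg r (agg_sub a x).
  move=> e0 v0 hv0; simp; have := hag e0 v0 hv0; have := hxag e0 v0 hv0.
  case: (posnP (a (inr e0))) => [->|/(heq e0 v0 hv0) ->]; nlia.
case: (atom_split ha hxag hxa hsub) => [//|->//].
Qed.


Lemma is_agg_ind Vs Es : is_subgraph r Vs Es -> is_agg r (indicator Vs Es).
Proof.
move=> H e v hv; simp; case he: (e \in Es) => //=.
by have /subsetP /(_ v hv) -> := H e he.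
Qed.

Lemma is_agg_edge e0 : is_agg r (indicator (r e0) [set e0]).
Proof. by apply: is_agg_ind => e; rewrite inE => /eqP ->. Qed.

Lemma is_agg_vert v0 : is_agg r (indicator [set v0] set0).
Proof. by apply: is_agg_ind => e; rewrite inE. Qed.

Lemma is_agg_max a b : is_agg r a -> is_agg r b -> is_agg r (agg_max a b).
Proof.
move=> ha hb e v hv; simp; have := ha e v hv; have := hb e v hv; nlia.
Qed.

Lemma is_agg_add a b : is_agg r a -> is_agg r b -> is_agg r (agg_add a b).
Proof.
move=> ha hb e v hv; simp; have := ha e v hv; have := hb e v hv; nlia.
Qed.

Lemma deg_le1 v e1 e2 : deg r v <= 1 -> v \in r e1 -> v \in r e2 -> e1 = e2.
Proof.
move=> /card_le1P H h1 h2.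
have := H e1; rewrite inE => /(_ h1 e2); rewrite !inE h2 => /esym /eqP //.
Qed.

Lemma deg_gt1 v : 1 < deg r v -> exists e1 e2, [/\ v \in r e1, v \in r e2 & e1 != e2].
Proof.
case/card_gt1P => e1 [e2 [h1 h2 hne]]; exists e1, e2; split=> //.
- by move: h1; rewrite inE.
- by move: h2; rewrite inE.
Qed.

Lemma not_prime p b c : is_agg r b -> is_agg r c -> summand r p (agg_add b c) ->
  ~ summand r p b -> ~ summand r p c -> ~ prime_el r p.
Proof. by move=> hb hc hs nb nc [_ /(_ b c hb hc hs)] []. Qed.


Lemma deg_of_prime p v : prime_el r p -> 0 < p (inl v) -> deg r v <= 1.
Proof.
move=> hp hv; have [hpa _] := hp; have h01 := atom01 hpa; have [hag _ _] := hpa.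
have pv1 : p (inl v) = 1 by have := h01 (inl v); nlia.
rewrite leqNgt; apply/negP => /deg_gt1 [e1 [e2 [h1 h2 hne]]].
wlog hle : e1 e2 h1 h2 hne / p (inr e2) <= p (inr e1).
  move=> W; case: (leqP (p (inr e2)) (p (inr e1))) => H; first exact: W H.
  by apply: (W e2 e1) => //; [rewrite eq_sym | apply: ltnW].
suff : ~ prime_el r p by [].
have hq1 := is_agg_edge e1; have hq2 := is_agg_edge e2.
case: (posnP (p (inr e1))) => pe1.
-
  have pe2 : p (inr e2) = 0 by nlia.
  apply: (not_prime (b := agg_max p (indicator (r e1) [set e1]))
                    (c := agg_max p (indicator (r e2) [set e2]))).
  + exact: is_agg_max.
  + exact: is_agg_max.
  + apply/summandP; split.
    * by move=> y; simp; nlia.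
    * move=> e u hu; simp; rewrite !inE.
      have i1 : (e == e1) ==> (u \in r e1) by apply/implyP => /eqP <-.
      have i2 : (e == e2) ==> (u \in r e2) by apply/implyP => /eqP <-.
      have n12 : ~~ ((e == e1) && (e == e2)).
        by apply/negP => /andP [/eqP -> /eqP]; apply/eqP.
      have := hag e u hu; have := h01 (inl u); have := h01 (inr e).
      move: i1 i2 n12; case: (e == e1); case: (e == e2);
        case: (u \in r e1); case: (u \in r e2) => //= *; nlia.
  + move/summandP => [_ hs]; have := hs e1 v h1; simp; rewrite !inE eqxx h1.
    by rewrite pe1 pv1.
  + move/summandP => [_ hs]; have := hs e2 v h2; simp; rewrite !inE eqxx h2.
    by rewrite pe2 pv1.
have pe1' : p (inr e1) = 1 by have := h01 (inr e1); nlia.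
case: (posnP (p (inr e2))) => pe2.
-
  apply: (not_prime (b := agg_max p (indicator (r e2) [set e2]))
                    (c := [ffun y => match y with inl _ => p y | inr _ => 0 end])).
  + exact: is_agg_max.
  + by move=> e u hu; simp.
  + apply/summandP; split.
    * by move=> y; simp; case: y => [u|e]; nlia.
    * move=> e u hu; simp; rewrite !inE.
      have i2 : (e == e2) ==> (u \in r e2) by apply/implyP => /eqP <-.
      have := hag e u hu; have := h01 (inl u); have := h01 (inr e).
      move: i2; case: (e == e2); case: (u \in r e2) => //= *; nlia.
  + move/summandP => [_ hs]; have := hs e2 v h2; simp; rewrite !inE eqxx h2.
    by rewrite pe2 pv1.
  + by move/summandP => [hs _]; have := hs (inr e1); simp; rewrite pe1'.
- have pe2' : p (inr e2) = 1 by have := h01 (inr e2); nlia.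
  apply: (not_prime (b := [ffun y => if y == inr e1 then 0 else p y])
                    (c := indicator (r e1) [set e1])).
  + move=> e u hu; simp; case: (inr e == inr e1) => //.
    exact: hag.
  + exact: hq1.
  + apply/summandP; split.
    * move=> y; simp; case: (y =P inr e1) => [->|_]; last by nlia.
      by rewrite !inE eqxx pe1'.
    * move=> e u hu; simp; rewrite !inE.
      case: (e =P e1) => [->|ne]; first by rewrite eqxx pe1'.
      have -> : (inr e == inr e1 :> (V + E)%type) = false.
        by apply/eqP => -[].
      nlia.
  + by move/summandP => [hs _]; have := hs (inr e1); simp; rewrite eqxx pe1'.
  + move/summandP => [hs _]; have := hs (inr e2); simp; rewrite !inE pe2'.
    by rewrite eq_sym (negbTE hne).
Qed.


Lemma prime_of_deg p : atom r p -> (forall v, 0 < p (inl v) -> deg r v <= 1) ->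
  prime_el r p.
Proof.
move=> hp hdeg; split=> // b c hb hc /summandP [h1 h2].
have h01 := atom01 hp; have [hag hp0 _] := hp.
case: (pickP (fun e => 0 < p (inr e))) => [e0 /= he0 | hnone].
- have pe0 : p (inr e0) = 1 by have := h01 (inr e0); nlia.
  have hd0 v e : v \in r e0 -> v \in r e -> e = e0.
    move=> hv0 hv; apply: (deg_le1 (v := v)) => //; apply: hdeg.
    by have := hag e0 v hv0; nlia.
  have hq := is_agg_edge e0.
  have hpq : p = indicator (r e0) [set e0].
    have hqp : forall y, indicator (r e0) [set e0] y <= p y; last
      have hsub : is_agg r (agg_sub p (indicator (r e0) [set e0])); last
      have [H0|//] := atom_split hp hq hqp hsub.
    + case=> [u|e]; simp; rewrite ?inE.
      * case hu: (u \in r e0) => //=; have := hag e0 u hu; nlia.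
      * by case: (e =P e0) => [->|]; nlia.
    + move=> e v hv; simp; rewrite !inE.
      case: (e =P e0) => [ee|ne]; first by subst e; rewrite hv; have := hag e0 v hv; nlia.
      case hv0: (v \in r e0); last by have := hag e v hv; nlia.
      by case: ne; apply: hd0 hv0 hv.
    + by move/ffunP: H0 => /(_ (inr e0)); simp; rewrite inE eqxx.
  have key x : is_agg r x -> 0 < x (inr e0) -> summand r p x.
    move=> hx hx0; rewrite hpq; apply/summandP; split.
    + case=> [u|e]; simp; rewrite ?inE.
      * case hu: (u \in r e0) => //=; have := hx e0 u hu; nlia.
      * by case: (e =P e0) => [->|]; nlia.
    + move=> e v hv; simp; rewrite !inE.
      case hv0: (v \in r e0); last by have := hx e v hv; nlia.
      rewrite (hd0 v e hv0 hv) eqxx; have := hx e0 v hv0; nlia.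
  have := h1 (inr e0); simp; rewrite pe0.
  case: (posnP (b (inr e0))) => hb0; last by move=> _; left; exact: key.
  rewrite hb0 => hc0; right; apply: key => //.
- have {}hnone e : p (inr e) = 0.
    by have := hnone e; simpl => /negbT; rewrite -leqNgt leqn0 => /eqP.
  have [y hy] := atom_nz hp.
  case: y hy => [v0|e] hy; last by move: hy; rewrite hnone.
  have pv0 : p (inl v0) = 1 by have := h01 (inl v0); nlia.
  have hq := is_agg_vert v0.
  have hpq : p = indicator [set v0] set0.
    have hqp : forall y, indicator [set v0] set0 y <= p y; last
      have hsub : is_agg r (agg_sub p (indicator [set v0] set0)); last
      have [H0|//] := atom_split hp hq hqp hsub.
    + case=> [u|e]; simp; rewrite ?inE; last by rewrite hnone.
      by case: (u =P v0) => [->|]; nlia.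
    + by move=> e v hv; simp; rewrite hnone.
    + by move/ffunP: H0 => /(_ (inl v0)); simp; rewrite inE eqxx.
  have key x : is_agg r x -> 0 < x (inl v0) ->
      (forall e, v0 \in r e -> x (inr e) < x (inl v0)) -> summand r p x.
    move=> hx hx0 hxe; rewrite hpq; apply/summandP; split.
    + case=> [u|e]; simp; rewrite ?inE //.
      by case: (u =P v0) => [->|]; nlia.
    + move=> e v hv; simp; rewrite !inE.
      case: (v =P v0) => [ev|]; last by have := hx e v hv; nlia.
      subst v; have := hxe e hv; nlia.
  have hv := h1 (inl v0); simpH hv; rewrite pv0 in hv.
  have he e : v0 \in r e -> b (inr e) + c (inr e) < b (inl v0) + c (inl v0).
    move=> hve; have := h2 e v0 hve; simp; rewrite hnone pv0; nlia.
  case: (pickP (fun e => v0 \in r e)) => [e1 /= he1 | hno].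
  + have hd e : v0 \in r e -> e = e1.
      by move=> hve; apply: (deg_le1 (v := v0)) => //; apply: hdeg; rewrite pv0.
    have := he e1 he1.
    case: (ltnP (b (inr e1)) (b (inl v0))) => hb1 hs.
    * left; apply: key => //; first by nlia.
      by move=> e /hd ->.
    * right; apply: key => //; first by nlia.
      by move=> e /hd ->; nlia.
  + have hno' e : v0 \in r e -> False by rewrite hno.
    case: (posnP (b (inl v0))) => hb0.
    * right; apply: key => //; first by nlia.
      by move=> e /hno'.
    * left; apply: key => //.
      by move=> e /hno'.
Qed.


Definition memG (Vs : {set V}) (Es : {set E}) (y : (V + E)%type) : bool :=
  match y with inl v => v \in Vs | inr e => e \in Es end.

Lemma indE Vs Es y : indicator Vs Es y = memG Vs Es y.
Proof. by case: y => [v|e]; simp. Qed.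

Lemma zero_of_vert x : is_agg r x -> (forall v, x (inl v) = 0) -> x = agg0 V E.
Proof.
move=> hx H; apply/ffunP; case=> [v|e]; simp; first exact: H.
have [v hv] := endpoint e; have := hx e v hv; rewrite H; nlia.
Qed.

Lemma const_conn (Es : {set E}) (g : V -> nat) u w :
  (forall e u w, e \in Es -> u \in r e -> w \in r e -> g u = g w) ->
  connect (sub_adj r Es) u w -> g u = g w.
Proof.
move=> H hc.
have hcl : closed (sub_adj r Es) [pred z | g z == g u].
  move=> x y /existsP [e /and3P [he hx hy]] /=.
  by rewrite !inE (H e x y he hx hy).
have := closed_connect hcl hc; rewrite !inE eqxx => /esym /eqP //.
Qed.

Lemma ind_atom Vs Es : is_subgraph r Vs Es -> Vs != set0 -> sub_connected r Vs Es ->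
  atom r (indicator Vs Es).
Proof.
move=> hs hn hc; have [v0 hv0] := set0Pn _ hn.
split; first exact: is_agg_ind.
  by move/ffunP => /(_ (inl v0)); simp; rewrite hv0.
move=> b c hb hc' hbc.
have hy y : b y + c y = memG Vs Es y.
  by move/ffunP: hbc => /(_ y); rewrite indE; simp.
have hadj e u w : e \in Es -> u \in r e -> w \in r e -> b (inl u) = b (inl w).
  move=> he hu hw.
  have := hy (inr e); have := hy (inl u); have := hy (inl w); rewrite /= he.
  have /subsetP hsu := hs e he; rewrite (hsu u hu) (hsu w hw).
  have := hb e u hu; have := hb e w hw; have := hc' e u hu; have := hc' e w hw.
  nlia.
have hconst w : w \in Vs -> b (inl w) = b (inl v0).
  move=> hw; apply: esym; apply: (const_conn (g := fun z => b (inl z)) _ (hc v0 w hv0 hw)).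
  by move=> e u u' he hu hu'; apply: hadj hu hu'.
have hout w : w \notin Vs -> b (inl w) = 0 /\ c (inl w) = 0.
  move=> hw; have := hy (inl w); rewrite /= (negbTE hw); nlia.
case: (posnP (b (inl v0))) => hb0.
- left; apply: zero_of_vert => // w.
  case hw: (w \in Vs); first by rewrite hconst.
  by have [] := hout w (negbT hw).
- right; apply: zero_of_vert => // w.
  case hw: (w \in Vs); last by have [] := hout w (negbT hw).
  have := hy (inl w); rewrite /= hw (hconst w hw); nlia.
Qed.


Lemma uniq_of_le1 (f : seq agg) :
  (forall h, h \in f -> exists y, 0 < h y) -> (forall y, agg_sum f y <= 1) -> uniq f.
Proof.
elim: f => [//|h f IH] Hpos Hle /=; apply/andP; split.
- apply/negP => hin; have [y hy] := Hpos h (mem_head _ _).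
  have := Hle y; have := le_sum y hin; simp; nlia.
- apply: IH => [h' hh'|y]; first by apply: Hpos; rewrite in_cons hh' orbT.
  by have := Hle y; simp; nlia.
Qed.

Section P4.
Variables (s : nat) (Vs : 'I_s -> {set V}) (Es : 'I_s -> {set E}).
Hypotheses (hsg : forall i, is_subgraph r (Vs i) (Es i))
  (hne : forall i, Vs i != set0) (hcn : forall i, sub_connected r (Vs i) (Es i))
  (hdj : forall i j, i != j -> [disjoint Vs i & Vs j] /\ [disjoint Es i & Es j]).

Let L := [seq indicator (Vs i) (Es i) | i <- enum 'I_s].
Let a := agg_sum L.

Lemma aE y : a y = \sum_(i < s) memG (Vs i) (Es i) y.
Proof.
rewrite /a agg_sumE /L big_map big_enum /=.
by apply: eq_bigr => i _; rewrite indE.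
Qed.

Lemma memG_uniq i j y : memG (Vs i) (Es i) y -> memG (Vs j) (Es j) y -> i = j.
Proof.
move=> hi hj; case: (i =P j) => // /eqP ne; have [d1 d2] := hdj ne.
case: y hi hj => [v|e] /= hi hj.
- by rewrite (disjointFr d1 hi) in hj.
- by rewrite (disjointFr d2 hi) in hj.
Qed.

Lemma a1 i y : memG (Vs i) (Es i) y -> a y = 1.
Proof.
move=> hy; rewrite aE (bigD1 i) //= hy big1 // => j hj.
case hjy: (memG (Vs j) (Es j) y) => //.
by move/eqP: hj; rewrite (memG_uniq hy hjy).
Qed.

Lemma apos y : 0 < a y -> exists i, memG (Vs i) (Es i) y.
Proof.
rewrite aE => H; apply/existsP; apply: contraTT H; rewrite negb_exists => /forallP H.
by rewrite big1 // => i _; rewrite (negbTE (H i)).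
Qed.

Lemma ale1 y : a y <= 1.
Proof.
case: (posnP (a y)) => [->//|/apos [i hi]]; by rewrite (a1 hi).
Qed.

Lemma fact_perm f : factorization r f a -> perm_eq f L.
Proof.
case=> hat hsum.
have hle h y : h \in f -> h y <= a y by move=> hf; rewrite -hsum; exact: le_sum.
have heq h e u i : h \in f -> e \in Es i -> u \in r e -> h (inr e) = h (inl u).
  move=> hf he hu.
  have hu' : u \in Vs i by have /subsetP := @hsg _ _ he; apply.
  apply: (sum_eq_le (F := fun h => h (inr e)) (G := fun h => h (inl u)) _ _ hf).
  - move=> h' hh'; have [hg _ _] := hat h' hh'; exact: hg e u hu.
  - by rewrite -!agg_sumE hsum (a1 (i := i)) // (a1 (i := i)).
have hconst h i u w : h \in f -> u \in Vs i -> w \in Vs i -> h (inl u) = h (inl w).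
  move=> hf hu hw; apply: (const_conn (g := fun z => h (inl z)) _ (@hcn _ _ _ hu hw)).
  move=> e x y he hx hy /=; rewrite -(heq h e x i) // (heq h e y i) //.
have hmemL h : h \in f -> exists i, h = indicator (Vs i) (Es i).
  move=> hf; have hh := hat h hf; have [hag hh0 _] := hh.
  have [y hy] := atom_nz hh.
  have [i hi] := apos (leq_trans hy (hle h y hf)).
  have [u [hu hu1]] : exists u, u \in Vs i /\ 0 < h (inl u).
    case: y hy hi => [u|e] hy hi; first by exists u.
    have [u hu] := endpoint e; exists u; split.
    + by have /subsetP := @hsg _ _ hi; apply.
    + by rewrite -(heq h e u i).
  have hv w : w \in Vs i -> h (inl w) = 1.
    move=> hw; rewrite -(hconst h i u w) //.
    by have := hle h (inl u) hf; rewrite (a1 (i := i)) //=; nlia.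
  have hG y' : memG (Vs i) (Es i) y' -> h y' = 1.
    case: y' => [w|e] /= hy'; first exact: hv.
    have [w hw] := endpoint e; rewrite (heq h e w i) //; apply: hv.
    by have /subsetP := @hsg _ _ hy'; apply.
  have hq := is_agg_ind (@hsg i).
  have hqp : forall y', indicator (Vs i) (Es i) y' <= h y'.
    move=> y'; rewrite indE; case hm: (memG _ _ y') => //=; by rewrite hG.
  have hsub : is_agg r (agg_sub h (indicator (Vs i) (Es i))).
    move=> e w hw; simp.
    case he: (e \in Es i).
    - have hw' : w \in Vs i by have /subsetP := @hsg _ _ he; apply.
      by rewrite hw' (hG (inr e)) // (hv w hw').
    case hwi: (w \in Vs i); last by have := hag e w hw; nlia.
    case: (posnP (h (inr e))) => [->//|hpos].
    have [j hj] := apos (leq_trans hpos (hle h _ hf)).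
    have hwj : w \in Vs j by have /subsetP := @hsg _ _ hj; apply.
    have ij : i = j by apply: (memG_uniq (y := inl w)).
    by subst j; rewrite /= he in hj.
  case: (atom_split hh hq hqp hsub) => [H0|->]; last by exists i.
  by have [v hv0] := set0Pn _ (hne i); move/ffunP: H0 => /(_ (inl v)); simp; rewrite hv0.
have hIL i : indicator (Vs i) (Es i) \in L by apply: map_f; rewrite mem_enum.
have hLf i : indicator (Vs i) (Es i) \in f.
  have [v hv] := set0Pn _ (hne i).
  case: (boolP (has (fun h : agg => 0 < h (inl v)) f)) => [/hasP [h hf hpos]|/hasPn H].
    have [j ej] := hmemL h hf.
    move: hpos; rewrite ej indE /= lt0b => hvj.
    by rewrite (memG_uniq (y := inl v) hv hvj) -ej.
  have := a1 (i := i) (y := inl v) hv; rewrite -hsum agg_sumE big1_seq //.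
  by move=> h /andP [_ hf]; have := H h hf; rewrite lt0n negbK => /eqP.
apply: uniq_perm.
- apply: uniq_of_le1; last by move=> y; rewrite hsum; exact: ale1.
  by move=> h hf; have := hat h hf; apply: atom_nz.
- rewrite map_inj_in_uniq ?enum_uniq // => i j _ _ eij.
  have [v hv] := set0Pn _ (hne i).
  have := congr1 (fun g : agg => g (inl v)) eij; rewrite !indE /= hv.
  move=> hvj; apply: (@memG_uniq i j (inl v)) => /=; [exact: hv | by move: hvj; case: (v \in Vs j)].
- move=> x; apply/idP/idP => [hx|/mapP [i _ ->]]; last exact: hLf.
  by have [i ->] := hmemL x hx.
Qed.

Lemma part4 : (exists f, factorization r f a) /\
   (forall f1 f2, factorization r f1 a -> factorization r f2 a -> perm_eq f1 f2).
Proof.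
split.
- exists L; split=> // x /mapP [i _ ->]; exact: ind_atom.
- move=> f1 f2 h1 h2; apply: (perm_trans (fact_perm h1)).
  by rewrite perm_sym; exact: fact_perm.
Qed.

End P4.

End S.

Theorem lemma4p12 (V E : finType) (r : E -> {set V})
    (hr : forall e : E, #|r e| = 2) (hV : 0 < #|V|) :
  (* (1) *)
  (forall a : aggT V E, atom r a ->
     (prime_el r a <-> forall v : V, 0 < a (inl v) -> deg r v <= 1)) /\
  (* (2) *)
  (forall (a b : aggT V E) (n : nat), atom r a -> is_agg r b -> 1 <= n ->
     summand r a (agg_scale n b) -> summand r a b) /\
  (* (3) *)
  (forall a : aggT V E, atom r a -> abs_irreducible r a) /\
  (* (4) *)
  (forall (s : nat) (Vs : 'I_s -> {set V}) (Es : 'I_s -> {set E}),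
     (forall i, is_subgraph r (Vs i) (Es i)) ->
     (forall i, Vs i != set0) ->
     (forall i, sub_connected r (Vs i) (Es i)) ->
     (forall i j, i != j -> [disjoint Vs i & Vs j] /\ [disjoint Es i & Es j]) ->
     let a := agg_sum [seq indicator (Vs i) (Es i) | i <- enum 'I_s] in
     (exists f, factorization r f a) /\
     (forall f1 f2, factorization r f1 a -> factorization r f2 a -> perm_eq f1 f2)).
Proof.
split; [|split; [|split]].
- move=> a ha; split.
  + move=> hp v hv; exact: (deg_of_prime hp hv).
  + exact: (prime_of_deg ha).
- move=> a b n ha hb hn; exact: part2.
- move=> a ha; exact: (part3 ha).
- move=> s Vs Es h1 h2 h3 h4 a; exact: (part4 hr h1 h2 h3 h4).
Qed.
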